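(* Let $\mu_1,\mu_2$ be compactly supported positive Borel measures on $\mathbb{C}$, with $\mu_2$ having infinite support, such that $\beta(\mu_1,\mu_2)<\infty$. Then $\operatorname{supp}(\mu_1)\subset \operatorname{Pc}(\operatorname{supp}(\mu_2))$.
   Context: For positive Borel measures $\mu_1,\mu_2$ on $\mathbb{C}$ with finite moments and $\mu_2$ infinitely supported, $\beta(\mu_1,\mu_2)=\sup\{\int|p|^2d\mu_1/\int|p|^2d\mu_2 : p\in\mathbb{P}[z]\setminus\{0\}\}\in(0,\infty]$ (equivalently, the limit of the largest generalized eigenvalues of the $(n+1)\times(n+1)$ truncations of $\mathbf{M}(\mu_1)$ with respect to those of $\mathbf{M}(\mu_2)$, where $\mathbf{M}(\mu)=(\int z^i\bar z^jd\mu)_{i,j\ge0}$). For a compact $K\subset\mathbb{C}$, its polynomially convex hull is $\operatorname{Pc}(K)=\{z\in\mathbb{C}: |p(z)|\le\max_{\xi\in K}|p(\xi)| \text{ for all } p\in\mathbb{P}[z]\}$. *)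

(* Defs.v *)
From HB Require Import structures.
From mathcomp Require Import all_boot all_order all_algebra.
From mathcomp Require Import all_classical all_reals all_analysis.
From mathcomp Require Import complex.
Set Implicit Arguments. Unset Strict Implicit. Unset Printing Implicit Defensive.
Import Order.TTheory GRing.Theory Num.Theory.
Import numFieldNormedType.Exports.
Local Open Scope classical_set_scope.
Local Open Scope ring_scope.

(* The complex plane C is modelled as R * R (with its product Borel
   sigma-algebra and product topology); a point x is identified with the
   complex number x.1 + i x.2. *)
Definition plane (R : realType) := (R * R)%type.

Definition toC (R : realType) (x : R * R) : R[i] := Complex x.1 x.2.

Definition cabs (R : realType) (w : R[i]) : R := Normc.normc w.

Definition supp (R : realType)
  (mu : {measure set (R * R)%type -> \bar R}) : set (R * R)%type :=
  [set z | forall e : R, 0 < e -> (0 < mu (ball z e))%E].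

Definition finite_moments (R : realType)
  (mu : {measure set (R * R)%type -> \bar R}) : Prop :=
  forall n : nat, (\int[mu]_x ((cabs (toC x)) ^+ n)%:E < +oo)%E.

Definition sqint (R : realType)
  (mu : {measure set (R * R)%type -> \bar R}) (p : {poly R[i]}) : \bar R :=
  (\int[mu]_x ((cabs (p.[toC x])) ^+ 2)%:E)%E.

(* beta(mu1, mu2) = sup over nonzero polynomials p of
   int |p|^2 dmu1 / int |p|^2 dmu2, an extended real.
   (Under the standing hypotheses both integrals are finite and the
   denominator is positive, so the quotient is taken of real values.) *)
Definition beta (R : realType)
  (mu1 mu2 : {measure set (R * R)%type -> \bar R}) : \bar R :=
  ereal_sup [set ((fine (sqint mu1 p)) / (fine (sqint mu2 p)))%:E
            | p in [set p : {poly R[i]} | p != 0]].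

Definition Pc (R : realType) (K : set (R * R)%type) : set (R * R)%type :=
  [set z | forall p : {poly R[i]},
      cabs (p.[toC z]) <= sup [set cabs (p.[toC xi]) | xi in K]].

(* Main.v *)
Require Import Defs.
From HB Require Import structures.
From mathcomp Require Import all_boot all_order all_algebra.
From mathcomp Require Import all_classical all_reals all_analysis.
From mathcomp Require Import complex.
Import Order.TTheory GRing.Theory Num.Theory.
Import numFieldNormedType.Exports.
Local Open Scope classical_set_scope.
Local Open Scope ring_scope.
From mathcomp Require Import ring lra.
Section S.

Variable R : realType.
Local Notation T := (R * R)%type.
Local Notation Re := (@complex.Re R).
Local Notation Im := (@complex.Im R).

Definition good (f : T -> R) := continuous f /\ measurable_fun setT f.

Lemma good_fst : good fst.
Proof. split; [move=> x; exact: cvg_fst | exact: measurable_fst]. Qed.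
Lemma good_snd : good snd.
Proof. split; [move=> x; exact: cvg_snd | exact: measurable_snd]. Qed.
Lemma good_cst c : good (fun _ => c).
Proof. split; [move=> x; exact: cvg_cst | exact: measurable_cst]. Qed.
Lemma good_add f g : good f -> good g -> good (fun x => f x + g x).
Proof.
move=> [cf mf] [cg mg]; split.
  by move=> x; apply: continuousD; [exact: cf|exact: cg].
exact: measurable_realfun.measurable_funD.
Qed.
Lemma good_mul f g : good f -> good g -> good (fun x => f x * g x).
Proof.
move=> [cf mf] [cg mg]; split.
  by move=> x; apply: continuousM; [exact: cf|exact: cg].
exact: measurable_realfun.measurable_funM.
Qed.
Lemma good_sub f g : good f -> good g -> good (fun x => f x - g x).
Proof.
move=> [cf mf] [cg mg]; split.
  by move=> x; apply: continuousB; [exact: cf|exact: cg].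
exact: measurable_realfun.measurable_funB.
Qed.
Lemma good_sqrt f : good f -> good (fun x => Num.sqrt (f x)).
Proof.
move=> [cf mf]; split.
  move=> x; apply: continuous_comp; [exact: cf| exact: sqrt_continuous].
exact: (measurableT_comp (measurable_realfun.continuous_measurable_fun (@sqrt_continuous R)) mf).
Qed.

Lemma good_poly (p : {poly R[i]}) :
  good (fun x => Re p.[toC x]) /\ good (fun x => Im p.[toC x]).
Proof.
elim/poly_ind: p => [|p c [hr hi]].
  have -> : (fun x : T => Re (0 : {poly R[i]}).[toC x]) = fun=> 0 by apply: funext => x; rewrite horner0.
  have -> : (fun x : T => Im (0 : {poly R[i]}).[toC x]) = fun=> 0 by apply: funext => x; rewrite horner0.
  by split; apply: good_cst.
have -> : (fun x => Re (p * 'X + c%:P).[toC x]) =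
  (fun x => (Re p.[toC x] * x.1 - Im p.[toC x] * x.2) + Re c).
  apply: funext => x; rewrite hornerMXaddC.
  by case: (p.[toC x]) => a b; case: c => c1 c2.
have -> : (fun x => Im (p * 'X + c%:P).[toC x]) =
  (fun x => (Re p.[toC x] * x.2 + Im p.[toC x] * x.1) + Im c).
  apply: funext => x; rewrite hornerMXaddC.
  by case: (p.[toC x]) => a b; case: c => c1 c2.
split; apply: good_add; try apply: good_cst.
  apply: good_sub; apply: good_mul => //; [exact: good_fst|exact: good_snd].
apply: good_add; apply: good_mul => //; [exact: good_snd|exact: good_fst].
Qed.

Lemma cabsE (u : R[i]) : cabs u = Num.sqrt (Re u ^+ 2 + Im u ^+ 2).
Proof. by case: u. Qed.

Lemma good_cabs (p : {poly R[i]}) : good (fun x => cabs p.[toC x]).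
Proof.
have [hr hi] := good_poly p.
have -> : (fun x => cabs p.[toC x]) =
   (fun x => Num.sqrt (Re p.[toC x] * Re p.[toC x] + Im p.[toC x] * Im p.[toC x])).
  by apply: funext => x; rewrite cabsE !expr2.
by apply: good_sqrt; apply: good_add; apply: good_mul.
Qed.


Lemma rat_near (x e : R) : 0 < e -> exists q : rat, ball x e (ratr q).
Proof.
move=> e0.
have : ball x e `&` range ratr !=set0.
  apply: dense_rat; last exact: ball_open.
  by exists x; apply: ballxx.
by move=> [y [bxy [q _ qy]]]; exists q; rewrite qy.
Qed.

Lemma ball_T_meas (x : T) e : measurable (ball x e).
Proof.
have -> : ball x e = ball x.1 e `*` ball x.2 e by [].
apply: measurableX; exact: measurable_realfun.measurable_ball.
Qed.

Definition rbox (q : rat * rat * rat) : set T :=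
  ball ((ratr q.1.1 : R), (ratr q.1.2 : R)) (ratr q.2).

Lemma supp_null (mu : {measure set T -> \bar R}) :
  exists N, measurable N /\ mu N = 0%E /\ ~` supp mu `<=` N.
Proof.
pose B (k : nat) : set T := match unpickle k with
  | Some q => if pselect (mu (rbox q) = 0%E) then rbox q else set0
  | None => set0 end.
have mB k : measurable (B k).
  rewrite /B; destruct (unpickle k) as [q|]; last exact: measurable0.
  destruct (pselect (mu (rbox q) = 0%E)); last exact: measurable0.
  exact: ball_T_meas.
have B0 k : mu (B k) = 0%E.
  rewrite /B; destruct (unpickle k) as [q|]; last exact: measure0.
  by destruct (pselect (mu (rbox q) = 0%E)) => //; exact: measure0.
exists (\bigcup_k B k); split; first exact: bigcupT_measurable.
split.
  apply/eqP; rewrite eq_le measure_ge0 andbT.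
  have := @measure_sigma_subadditive _ _ _ mu (\bigcup_k B k) B mB (bigcupT_measurable B mB) (@subset_refl _ _).
  by rewrite eseries0.
move=> x /= nx.
have [e e0 he] : exists2 e : R, 0 < e & mu (ball x e) = 0%E.
  apply: contrapT => hne; apply: nx => e e0.
  rewrite lt0e measure_ge0 andbT; apply/eqP => h; apply: hne; by exists e.
have e20 : 0 < e / 2 by rewrite divr_gt0.
have e40 : 0 < e / 4 by rewrite divr_gt0.
have [r hr] := rat_near (e / 4) (e / 4) e40.
have r0 : 0 < (ratr r : R) /\ (ratr r : R) < e / 2.
  move: hr; rewrite /ball /= ltr_distlC => /andP[h1 h2].
  move: (ratr r : R) h1 h2 => q h1 h2; split; lra.
have [a ha] := rat_near x.1 (ratr r) (proj1 r0).
have [b hb] := rat_near x.2 (ratr r) (proj1 r0).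
have hbx : rbox (a, b, r) x by split; apply: ball_sym.
have sub : rbox (a, b, r) `<=` ball x e.
  move=> y hy.
  have : ball x (ratr r + ratr r) y by apply: ball_triangle hy; split.
  apply: le_ball; move: (proj2 r0); move: (ratr r : R) => q h; lra.
have mr : mu (rbox (a, b, r)) = 0%E.
  apply/eqP; rewrite eq_le measure_ge0 andbT -he.
  apply: le_measure; [rewrite inE; exact: ball_T_meas|rewrite inE; exact: ball_T_meas|exact: sub].
exists (pickle (a, b, r)); first exact: I.
rewrite /B pickleK.
by destruct (pselect (mu (rbox (a, b, r)) = 0%E)).
Qed.

Lemma int_upper (mu : {measure set T -> \bar R}) (f : T -> R) (B : R) :
  measurable_fun setT f -> (forall x, 0 <= f x) -> 0 <= B ->
  (forall x, supp mu x -> f x <= B) ->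
  (\int[mu]_x (f x)%:E <= B%:E * mu setT)%E.
Proof.
move=> mf f0 B0 fB.
rewrite -(integral_cst mu (@measurableT _ _) B%:E).
apply: ae_ge0_le_integral => //;
  try (by move=> x _; rewrite lee_fin);
  try (exact/measurable_realfun.measurable_EFinP);
  try exact: measurable_cst.
have [N [mN [N0 sN]]] := supp_null mu.
exists N; split => // x /= hx; apply: sN => hs; apply: hx => _.
by rewrite lee_fin; apply: fB.
Qed.

Lemma int_lower (mu : {measure set T -> \bar R}) (f : T -> R) (A : set T) (b : R) :
  measurable A -> measurable_fun setT f -> (forall x, 0 <= f x) -> 0 <= b ->
  (forall x, A x -> b <= f x) ->
  (b%:E * mu A <= \int[mu]_x (f x)%:E)%E.
Proof.
move=> mA mf f0 b0 fb.
rewrite -(integral_cst mu mA b%:E).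
have h1 : (\int[mu]_(x in A) cst b%:E x <= \int[mu]_(x in A) (f x)%:E)%E.
  apply: ge0_le_integral => //;
    try (by move=> x _; rewrite lee_fin);
    try exact: measurable_cst;
    try (by apply/measurable_realfun.measurable_EFinP; apply: measurable_funS mf).
have h2 : (\int[mu]_(x in A) (f x)%:E <= \int[mu]_(x in setT) (f x)%:E)%E.
  apply: ge0_subset_integral => //;
    try (by move=> x _; rewrite lee_fin).
  exact/measurable_realfun.measurable_EFinP.
apply: le_trans h1 _; exact: h2.
Qed.

Lemma cabs_ge0 (u : R[i]) : 0 <= cabs u.
Proof. by rewrite cabsE sqrtr_ge0. Qed.

Lemma cabsM (u v : R[i]) : cabs (u * v) = cabs u * cabs v.
Proof. exact: Normc.normcM. Qed.

Lemma cabsX (u : R[i]) n : cabs (u ^+ n) = cabs u ^+ n.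
Proof.
elim: n => [|n IH]; first by rewrite !expr0 /cabs Normc.normc1.
by rewrite !exprS cabsM IH.
Qed.

Lemma cabsD (u v : R[i]) : cabs (u + v) <= cabs u + cabs v.
Proof. exact: le_normcD. Qed.

Lemma cabsRC (r : R) : 0 <= r -> cabs ((r%:C)%C) = r.
Proof.
move=> r0; rewrite cabsE /= expr0n /= addr0 sqrtr_sqr ger0_norm //.
Qed.

Lemma total_finite (mu : {measure set T -> \bar R}) :
  finite_moments mu -> (mu setT < +oo)%E.
Proof.
move=> /(_ 0%N).
have -> : (fun x : T => ((cabs (toC x)) ^+ 0)%:E) = cst 1%:E.
  by apply: funext => x; rewrite expr0.
by rewrite integral_cst // mul1e.
Qed.

Lemma near_gt (f : T -> R) x c : continuous f -> c < f x ->
  exists2 e, 0 < e & forall y, ball x e y -> c < f y.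
Proof.
move=> cf cx.
have := @cvgr_gt R T (nbhs x) (nbhs_filter x) f (f x) (cf x) c cx.
move=> h; have [e e0 he] := (iffLR (nbhs_ballP _ _)) h.
by exists e => // y bxy; exact: (he y bxy).
Qed.

Lemma bernoulli (x : R) n : 0 <= x -> 1 + n%:R * x <= (1 + x) ^+ n.
Proof.
move=> x0; elim: n => [|n IH]; first by rewrite mul0r addr0 expr0.
rewrite exprS -natr1.
have h : 0 <= 1 + x by lra.
have := ler_wpM2l h IH.
have : 0 <= n%:R * x * x by apply: mulr_ge0 => //; apply: mulr_ge0.
move: (n%:R : R) ((1 + x) ^+ n) => m P h1 h2.
nra.
Qed.

Lemma pow2_le (x y : R) n : 0 <= x -> x <= y -> (x ^+ n) ^+ 2 <= (y ^+ n) ^+ 2.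
Proof.
move=> x0 xy; have y0 : 0 <= y := le_trans x0 xy.
apply: lerXn2r; rewrite ?nnegrE ?exprn_ge0 //.
by apply: lerXn2r; rewrite ?nnegrE.
Qed.

Lemma fine_bounds (x : \bar R) (lo hi : R) :
  (lo%:E <= x)%E -> (x <= hi%:E)%E -> lo <= fine x <= hi.
Proof. by case: x => [r||] //=; rewrite !lee_fin => -> ->. Qed.

Lemma fine_ge (x : \bar R) (lo : R) :
  (lo%:E <= x)%E -> (x < +oo)%E -> lo <= fine x.
Proof. by case: x => [r||] //=; rewrite lee_fin. Qed.

Lemma ratio_ge (N D lo hi : R) : 0 <= lo -> lo <= N -> 0 < D -> D <= hi ->
  lo / hi <= N / D.
Proof.
move=> lo0 loN D0 Dhi; have hi0 : 0 < hi := lt_le_trans D0 Dhi.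
rewrite ler_pdivlMr //.
apply: (@le_trans _ _ (lo / hi * hi)); last by rewrite divfK ?gt_eqF.
by apply: ler_wpM2l => //; rewrite divr_ge0 // ltW.
Qed.

Lemma ratio_eq (c M a b : R) n :
  (c ^+ n) ^+ 2 * a / ((M ^+ n) ^+ 2 * b) = ((c / M) ^+ n) ^+ 2 * (a / b).
Proof. by rewrite !expr_div_n mulf_div. Qed.

Lemma final_contra (P P2 nn ND rr rh kk : R) : 0 < kk ->
  1 + nn * (rh - 1) <= P -> P <= P2 -> P2 * kk <= ND -> ND <= rr ->
  rr < nn * ((rh - 1) * kk) -> False.
Proof.
move=> k0 h1 h2 h3 h4 h5.
have h6 := ler_wpM2r (ltW k0) (le_trans h1 h2).
have e : (1 + nn * (rh - 1)) * kk = kk + nn * ((rh - 1) * kk).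
  by rewrite mulrDl mul1r mulrA.
rewrite e in h6.
move: (nn * ((rh - 1) * kk)) h5 h6 => X h5 h6.
move: (P2 * kk) h3 h6 => Y h3 h6.
lra.
Qed.
End S.
Arguments good_cabs {R}.
Arguments ratio_eq {R}.
Arguments final_contra {R}.
Arguments ball_T_meas {R}.
Arguments supp_null {R}.
Arguments int_upper {R}.
Arguments int_lower {R}.
Arguments cabs_ge0 {R}.
Arguments cabsM {R}.
Arguments cabsX {R}.
Arguments cabsD {R}.
Arguments cabsRC {R}.
Arguments total_finite {R}.
Arguments near_gt {R}.
Arguments bernoulli {R}.
Arguments pow2_le {R}.
Arguments fine_bounds {R}.
Arguments fine_ge {R}.
Arguments ratio_ge {R}.

Theorem theorem1 (R : realType)
  (mu1 mu2 : {measure set (R * R)%type -> \bar R}) :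
  finite_moments mu1 -> finite_moments mu2 ->
  compact (supp mu1) -> compact (supp mu2) ->
  ~ finite_set (supp mu2) ->
  (beta mu1 mu2 < +oo)%E ->
  supp mu1 `<=` Pc (supp mu2).
Proof.
move=> hm1 hm2 cK1 cK2 inf hb z0 hz0 p.
rewrite leNgt; apply/negP => hlt.
set a := cabs p.[toC z0] in hlt.
set s := sup _ in hlt.
have [w Kw] : supp mu2 !=set0.
  apply/set0P/negP => /eqP h; apply: inf; rewrite h; exact: finite_set0.
have hS : has_sup [set cabs p.[toC xi] | xi in supp mu2].
  apply: compact_has_sup; first by exists (cabs p.[toC w]), w.
  apply: continuous_compact => //; apply: continuous_subspaceT.
  exact: (good_cabs p).1.
have ub : forall x, supp mu2 x -> cabs p.[toC x] <= s.
  by move=> x Kx; apply: sup_upper_bound => //; exists x.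
have s0 : 0 <= s by apply: le_trans (ub w Kw); exact: cabs_ge0.
pose g := a - s.
have g0 : 0 < g by rewrite subr_gt0.
have [eps [eps0 epsg weps]] : exists eps : R,
    [/\ 0 < eps, eps < g / 2 & p.[toC w] + (eps%:C)%C != 0].
  case: (eqVneq (p.[toC w] + ((g / 4)%:C)%C) 0) => h.
  - exists (g / 8); split; [by rewrite divr_gt0 | lra |].
    have -> : p.[toC w] + ((g / 8)%:C)%C = ((g / 8 - g / 4)%:C)%C.
      have hp : p.[toC w] = - ((g / 4)%:C)%C.
        by apply/eqP; rewrite -subr_eq0 opprK h.
      by rewrite hp rmorphB /= addrC.
    apply/negP => /eqP h2.
    have : g / 8 - g / 4 = 0 by apply: (@complexI R); rewrite h2.
    lra.
  - by exists (g / 4); split => //; [rewrite divr_gt0 | lra].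
pose q := p + ((eps%:C)%C)%:P.
have hq x : q.[x] = p.[x] + (eps%:C)%C by rewrite hornerD hornerC.
have F1 : forall x, supp mu2 x -> cabs q.[toC x] <= s + eps.
  move=> x Kx; rewrite hq; apply: le_trans (cabsD _ _) _.
  rewrite cabsRC; last exact: ltW eps0.
  by apply: lerD => //; exact: ub.
have F2 : a - eps <= cabs q.[toC z0].
  have : a <= cabs q.[toC z0] + eps.
    rewrite /a (_ : p.[toC z0] = q.[toC z0] + - (eps%:C)%C); last first.
      by rewrite hq addrK.
    apply: le_trans (cabsD _ _) _.
    have -> : cabs (- (eps%:C)%C) = cabs ((eps%:C)%C) by exact: normcN.
    by rewrite cabsRC; last exact: ltW eps0.
  lra.
pose c := (a + s) / 2.
pose M := s + eps.
have M0 : 0 < M by rewrite /M; lra.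
have Mc : M < c by rewrite /M /c /g in epsg *; lra.
have ca : c < cabs q.[toC z0] by apply: lt_le_trans F2; rewrite /c /g in epsg *; lra.
have [hcq hmq] := good_cabs q.
have [e1 e10 he1] := near_gt _ _ _ hcq ca.
have qw0 : 0 < cabs q.[toC w].
  rewrite lt_neqAle cabs_ge0 andbT eq_sym; apply/eqP => h.
  by move: weps; rewrite -hq (Normc.eq0_normc h) eqxx.
pose d := cabs q.[toC w] / 2.
have d0 : 0 < d by rewrite divr_gt0.
have hd : d < cabs q.[toC w] by rewrite /d; lra.
have [e2 e20 he2] := near_gt _ _ _ hcq hd.
have m1pos : (0 < mu1 (ball z0 e1))%E := hz0 e1 e10.
have m2pos : (0 < mu2 (ball w e2))%E := Kw e2 e20.
have T1f := total_finite mu1 hm1.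
have T2f := total_finite mu2 hm2.
have m1T : (mu1 (ball z0 e1) <= mu1 setT)%E.
  by apply: le_measure; [rewrite inE; exact: ball_T_meas|rewrite inE; exact: measurableT|].
have m2T : (mu2 (ball w e2) <= mu2 setT)%E.
  by apply: le_measure; [rewrite inE; exact: ball_T_meas|rewrite inE; exact: measurableT|].
pose fm1 := fine (mu1 (ball z0 e1)).
pose fm2 := fine (mu2 (ball w e2)).
pose fT1 := fine (mu1 setT).
pose fT2 := fine (mu2 setT).
have hm1E : mu1 (ball z0 e1) = fm1%:E.
  by rewrite fineK // ge0_fin_numE ?measure_ge0 // (le_lt_trans m1T T1f).
have hm2E : mu2 (ball w e2) = fm2%:E.
  by rewrite fineK // ge0_fin_numE ?measure_ge0 // (le_lt_trans m2T T2f).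
have hT1E : mu1 setT = fT1%:E.
  by rewrite fineK // ge0_fin_numE ?measure_ge0.
have hT2E : mu2 setT = fT2%:E.
  by rewrite fineK // ge0_fin_numE ?measure_ge0.
have fm1p : 0 < fm1 by rewrite -lte_fin -hm1E.
have fm2p : 0 < fm2 by rewrite -lte_fin -hm2E.
have fT2p : 0 < fT2.
  by rewrite -lte_fin -hT2E; apply: lt_le_trans m2T.
have [z1 Kz1 hz1] := compact_EVT_max (ex_intro _ z0 hz0) cK1 (continuous_subspaceT hcq).
pose M1 := cabs q.[toC z1].
have hK1 : forall x, supp mu1 x -> cabs q.[toC x] <= M1.
  by move=> x Kx; apply: hz1; exact: mem_set.
pose rho := c / M.
have rho1 : 1 < rho by rewrite /rho ltr_pdivlMr // mul1r.
pose k := fm1 / fT2.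
have k0 : 0 < k by rewrite divr_gt0.
pose r := fine (beta mu1 mu2).
have rk0 : 0 < (rho - 1) * k by rewrite mulr_gt0 // subr_gt0.
pose n := (Num.truncn (r / ((rho - 1) * k))).+1.
have hn : r < n%:R * ((rho - 1) * k).
  by have := truncnS_gt (r / ((rho - 1) * k)); rewrite -/n ltr_pdivrMr.
have c0 : 0 <= c by apply: ltW; apply: lt_trans Mc.
pose f x := ((cabs q.[toC x]) ^+ n) ^+ 2.
have mf : measurable_fun setT f.
  by apply: measurable_realfun.measurable_funX; apply: measurable_realfun.measurable_funX.
have f0 x : 0 <= f x by rewrite /f sqr_ge0.
have sqE (mu : {measure set (R * R)%type -> \bar R}) :
    (sqint mu (q ^+ n) = \int[mu]_x (f x)%:E)%E.
  by rewrite /sqint; apply: eq_integral => x _; rewrite horner_exp cabsX.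
have N1 : ((((c ^+ n) ^+ 2) * fm1)%:E <= sqint mu1 (q ^+ n))%E.
  rewrite sqE EFinM -hm1E; apply: int_lower => //.
  - exact: ball_T_meas.
  - exact: sqr_ge0.
  - by move=> y hy; apply: pow2_le => //; apply: ltW; apply: he1.
have N2 : (sqint mu1 (q ^+ n) <= (((M1 ^+ n) ^+ 2) * fT1)%:E)%E.
  rewrite sqE EFinM -hT1E; apply: int_upper => //.
  - exact: sqr_ge0.
  - by move=> x Kx; apply: pow2_le; [exact: cabs_ge0 | exact: hK1].
have D1 : ((((d ^+ n) ^+ 2) * fm2)%:E <= sqint mu2 (q ^+ n))%E.
  rewrite sqE EFinM -hm2E; apply: int_lower => //.
  - exact: ball_T_meas.
  - exact: sqr_ge0.
  - by move=> y hy; apply: pow2_le; [exact: ltW | apply: ltW; apply: he2].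
have D2 : (sqint mu2 (q ^+ n) <= (((M ^+ n) ^+ 2) * fT2)%:E)%E.
  rewrite sqE EFinM -hT2E; apply: int_upper => //.
  - exact: sqr_ge0.
  - by move=> x Kx; apply: pow2_le; [exact: cabs_ge0 | exact: F1].
have /andP[Nlo _] := fine_bounds _ _ _ N1 N2.
have /andP[Dlo Dhi] := fine_bounds _ _ _ D1 D2.
have Dpos : 0 < fine (sqint mu2 (q ^+ n)).
  apply: lt_le_trans Dlo; apply: mulr_gt0 => //.
  by rewrite exprn_gt0 // exprn_gt0.
have hratio := ratio_ge _ _ _ _ (mulr_ge0 (sqr_ge0 _) (ltW fm1p)) Nlo Dpos Dhi.
have q0 : q != 0.
  by apply/eqP => q0; move: weps; rewrite -hq q0 horner0 eqxx.
have rb : ((fine (sqint mu1 (q ^+ n)) / fine (sqint mu2 (q ^+ n)))%:E <= beta mu1 mu2)%E.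
  by apply: ereal_sup_ubound; exists (q ^+ n) => //=; rewrite expf_neq0.
have hr := fine_ge _ _ rb hb.
have E : (c ^+ n) ^+ 2 * fm1 / ((M ^+ n) ^+ 2 * fT2) = (rho ^+ n) ^+ 2 * k.
  exact: ratio_eq.
have hb1 : 1 + n%:R * (rho - 1) <= rho ^+ n.
  have rho10 : 0 <= rho - 1 by rewrite subr_ge0 ltW.
  by have := bernoulli (rho - 1) n rho10; rewrite [1 + (rho - 1)]addrC subrK.
have hP2 : rho ^+ n <= (rho ^+ n) ^+ 2.
  by apply: ler_eXnr => //; apply: exprn_ege1; apply: ltW.
rewrite E in hratio.
exact: (final_contra _ _ _ _ _ _ _ k0 hb1 hP2 hratio hr hn).
Qed.
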